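(* Let $x^0=0,x^1,x^2,\dots$ be the (random) states chosen by DRBG($N$) in the discrete setting described in the context, let $SC^t=\sum_{i=1}^t\|x^i-x^{i-1}\|$, and let $\phi^t=\frac{1}{2\theta}\big(w^t(x_1)+w^t(x_m)\big)-\frac{\|x_m-x_1\|}{2}$. Then for every time step $t$, $\mathbb{E}[SC^t]\le\phi^t$.
   Context: Discrete setting: a finite set of states $M=\{x_1,\dots,x_m\}\subset\mathbb{R}^+$ with $x_1=0$ and equal spacing $x_{k+1}-x_k=\delta$; a norm $\|\cdot\|$ on $\mathbb{R}$; $\theta\ge1$ and $N(\cdot)=\theta\|\cdot\|$; cost functions $c^t:M\to\mathbb{R}^+$ that are restrictions to $M$ of convex functions. Work function: $w^0(x)=N(x)$ and $w^t(x)=\min_{y\in M}\{w^{t-1}(y)+c^t(y)+N(x-y)\}$ for $x\in M$. Algorithm DRBG($N$): draw a single random number $r$ uniformly from $(-1,1)$; at each time step $t$ go to the state $x^t\in M$ minimizing $Y^t(x)=w^{t-1}(x)+rN(x)$. The expectation is over $r$. *)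

(* Defs.v *)
From HB Require Import structures.
From mathcomp Require Import all_boot all_order all_algebra.
From mathcomp Require Import all_classical all_reals all_analysis.
Set Implicit Arguments. Unset Strict Implicit. Unset Printing Implicit Defensive.
Import Order.TTheory GRing.Theory Num.Theory.
Local Open Scope ring_scope.

Section DRBG.
Variable R : realType.

Definition is_norm (nrm : R -> R) : Prop :=
  [/\ (forall x, nrm x = 0 -> x = 0),
      (forall a x, nrm (a * x) = `|a| * nrm x) &
      (forall x y, nrm (x + y) <= nrm x + nrm y)].

Definition convex_fun (g : R -> R) : Prop :=
  forall x y l, 0 <= l <= 1 -> g (l * x + (1 - l) * y) <= l * g x + (1 - l) * g y.

(* The m = n.+1 states: x_{k+1} = k * delta, k : 'I_n.+1, so x_1 = 0. *)
Definition state (delta : R) (n : nat) (k : 'I_n.+1) : R := k%:R * delta.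

Definition minI (n : nat) (F : 'I_n.+1 -> R) : R :=
  \big[Num.min/F ord0]_(i < n.+1) F i.

(* Work function w^t, with N = theta * nrm and costs c t : 'I_n.+1 -> R. *)
Fixpoint work (nrm : R -> R) (theta delta : R) (n : nat)
    (c : nat -> 'I_n.+1 -> R) (t : nat) : 'I_n.+1 -> R :=
  match t with
  | 0 => fun x => theta * nrm (state delta x)
  | t'.+1 => fun x => minI (fun y => work nrm theta delta c t' y + c t y
                                     + theta * nrm (state delta x - state delta y))
  end.

(* State x^t chosen by DRBG(N) with random number r (ties broken by argmin). *)
Definition drbg (nrm : R -> R) (theta delta : R) (n : nat)
    (c : nat -> 'I_n.+1 -> R) (r : R) (t : nat) : 'I_n.+1 :=
  match t with
  | 0 => ord0
  | t'.+1 => [arg min_(i < ord0)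
                (work nrm theta delta c t' i + r * (theta * nrm (state delta i)))]%O
  end.

Definition SC (nrm : R -> R) (theta delta : R) (n : nat)
    (c : nat -> 'I_n.+1 -> R) (r : R) (t : nat) : R :=
  \sum_(1 <= i < t.+1)
     nrm (state delta (drbg nrm theta delta c r i)
          - state delta (drbg nrm theta delta c r i.-1)).

Definition phi (nrm : R -> R) (theta delta : R) (n : nat)
    (c : nat -> 'I_n.+1 -> R) (t : nat) : R :=
  (work nrm theta delta c t ord0 + work nrm theta delta c t ord_max) / (2 * theta)
  - nrm (@state delta n ord_max - @state delta n ord0) / 2.

(* Expectation over r uniform on (-1,1). *)
Definition unif_dom : set R := `]-1, 1[%classic.

Definition expected_SC (nrm : R -> R) (theta delta : R) (n : nat)
    (c : nat -> 'I_n.+1 -> R) (t : nat) : \bar R :=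
  ((2^-1)%:E * \int[@lebesgue_measure R]_(r in unif_dom)
                 (SC nrm theta delta c r t)%:E)%E.

End DRBG.

(* Main.v *)
Require Import Defs.
From HB Require Import structures.
From mathcomp Require Import all_boot all_order all_algebra.
From mathcomp Require Import all_classical all_reals all_analysis.
Import Order.TTheory GRing.Theory Num.Theory.
From mathcomp Require Import ring lra measurable_realfun.
Set Implicit Arguments. Unset Strict Implicit. Unset Printing Implicit Defensive.
Local Open Scope ring_scope.

Section Disc.
Variables (R : realType) (n : nat) (b : R).
Hypothesis b0 : 0 < b.

Definition dist (i j : nat) : R := `|i%:R - j%:R|.
Definition slope (f : nat -> R) k := f k.+1 - f k.
Definition cvx (f : nat -> R) := forall k, (k.+2 <= n)%N -> slope f k <= slope f k.+1.

Lemma dist_le i j : (j <= i)%N -> dist i j = i%:R - j%:R.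
Proof. by move=> h; rewrite /dist ger0_norm // subr_ge0 ler_nat. Qed.
Lemma dist_ge i j : (i <= j)%N -> dist i j = j%:R - i%:R.
Proof. by move=> h; rewrite /dist ler0_norm ?opprB // subr_le0 ler_nat. Qed.
Lemma dist_tri i j k : dist i k <= dist i j + dist j k.
Proof. exact: ler_distD. Qed.
Lemma dist_ge0 i j : 0 <= dist i j.
Proof. exact: normr_ge0. Qed.

Lemma cvx_mono f : cvx f -> forall k j, (k <= j)%N -> (j < n)%N -> slope f k <= slope f j.
Proof.
move=> cf k; elim=> [|j IH] kj jn.
  by rewrite leqn0 in kj; move/eqP: kj ->.
case: (ltngtP k j.+1) kj => // [kj|->] _ //.
apply: le_trans (IH kj (ltnW jn)) (cf j jn).
Qed.

Definition infspec (h G : nat -> R) :=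
  (forall i j, (i <= n)%N -> (j <= n)%N -> G i <= h j + b * dist i j) /\
  (forall i, (i <= n)%N -> exists2 j, (j <= n)%N & G i = h j + b * dist i j).

Lemma infspec_lip h G : infspec h G ->
  forall i j, (i <= n)%N -> (j <= n)%N -> G i <= G j + b * dist i j.
Proof.
move=> [H1 H2] i j ilt jlt; have [j' j'lt ->] := H2 j jlt.
apply: le_trans (H1 i j' ilt j'lt) _.
have := ler_wpM2l (ltW b0) (dist_tri i j j'); rewrite mulrDr; lra.
Qed.

Lemma infspec_slope_bd h G : infspec h G -> forall k, (k < n)%N ->
  -b <= slope G k <= b.
Proof.
move=> hG k kn; have l1 := infspec_lip hG (ltnW kn) kn.
have l2 := infspec_lip hG kn (ltnW kn).
rewrite (dist_ge (leqnSn k)) in l1; rewrite (dist_le (leqnSn k)) in l2.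
rewrite /slope -natr1 in l1 l2 *; apply/andP; split; lra.
Qed.

Lemma infspec_slope h G : cvx h -> infspec h G -> forall k, (k < n)%N ->
  Num.min (slope h k) b <= slope G k /\ slope G k <= Num.max (slope h k) (-b).
Proof.
move=> ch [H1 H2] k kn; rewrite /slope; split.
- have [j jn Gj] := H2 k.+1 kn.
  case: (leqP j k) => jk.
    have := H1 k j (ltnW kn) jn; rewrite Gj (dist_le jk) (dist_le (leq_trans jk (leqnSn k))).
    rewrite /slope -natr1 ge_min => h1; apply/orP; right; lra.
  destruct j as [|j]; first by [].
  have := H1 k j (ltnW kn) (ltnW jn); rewrite Gj (dist_ge (jk : (k <= j)%N)) (dist_ge jk).
  have := cvx_mono ch (jk : (k <= j)%N) jn; rewrite /slope -!natr1 ge_min => h1 h2.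
  apply/orP; left; lra.
- have [j jn Gj] := H2 k (ltnW kn).
  case: (leqP j k) => jk.
    have := H1 k.+1 j.+1 kn (leq_ltn_trans jk kn).
    rewrite Gj (dist_le jk) (dist_le (jk : (j.+1 <= k.+1)%N)).
    have := cvx_mono ch jk kn; rewrite /slope -!natr1 le_max => h1 h2.
    apply/orP; left; lra.
  have := H1 k.+1 j kn jn; rewrite Gj (dist_ge jk) (dist_ge (ltnW jk)).
  rewrite /slope -!natr1 le_max => h1; apply/orP; right; lra.
Qed.

Lemma infspec_clamp h G : cvx h -> infspec h G -> forall k, (k < n)%N ->
  (b <= slope h k -> slope G k = b) /\ (slope h k <= -b -> slope G k = -b) /\
  (-b <= slope h k <= b -> slope G k = slope h k).
Proof.
move=> ch hG k kn; have /andP[l1 l2] := infspec_slope_bd hG kn.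
have [m1 m2] := infspec_slope ch hG kn.
split; [|split].
- move=> hb; move: m1; rewrite ge_min => /orP[] m1; apply/eqP; rewrite eq_le l2 /=; lra.
- move=> hb; move: m2; rewrite le_max => /orP[] m2; apply/eqP; rewrite eq_le l1 andbT; lra.
- move=> /andP[hb1 hb2]; move: m1 m2; rewrite ge_min le_max => /orP[] m1 /orP[] m2; lra.
Qed.

Lemma infspec_cvx h G : cvx h -> infspec h G -> cvx G.
Proof.
move=> ch hG k kn.
have k1 : (k < n)%N by apply: leq_trans kn.
have /andP[l1 l2] := infspec_slope_bd hG k1.
have /andP[l3 l4] := infspec_slope_bd hG kn.
have [m1 m2] := infspec_slope ch hG k1.
have [m3 m4] := infspec_slope ch hG kn.
have := ch k kn.
move: m1 m2 m3 m4; rewrite !ge_min !le_max.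
move=> /orP[] m1 /orP[] m2 /orP[] m3 /orP[] m4; lra.
Qed.


Lemma infspec_mono W c G :
  (forall i j, (i <= n)%N -> (j <= n)%N -> W i <= W j + b * dist i j) ->
  (forall j, (j <= n)%N -> 0 <= c j) ->
  infspec (fun j => W j + c j) G -> forall i, (i <= n)%N -> W i <= G i.
Proof.
move=> lip c0 [_ H2] i ilt; have [j jlt ->] := H2 i ilt.
have := lip i j ilt jlt; have := c0 j jlt; lra.
Qed.

Lemma sign_slope W c G : cvx (fun j => W j + c j) ->
  infspec (fun j => W j + c j) G -> forall k, (k < n)%N -> -b <= slope W k <= b ->
  (0 <= slope c k -> slope W k <= slope G k) /\ (slope c k <= 0 -> slope G k <= slope W k).
Proof.
move=> ch hG k kn /andP[w1 w2]; have [m1 m2] := infspec_slope ch hG kn.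
have e : slope (fun j => W j + c j) k = slope W k + slope c k.
  by rewrite /slope; lra.
rewrite e in m1 m2; split => hc.
  by move: m1; rewrite ge_min => /orP[] m1; lra.
by move: m2; rewrite le_max => /orP[] m2; lra.
Qed.

Lemma valley e c : cvx c -> (forall i, (i <= n)%N -> 0 <= e i) ->
  (forall k, (k < n)%N -> 0 <= slope c k -> 0 <= slope e k) ->
  (forall k, (k < n)%N -> slope c k <= 0 -> slope e k <= 0) ->
  \sum_(0 <= k < n) `|slope e k| <= e 0%N + e n.
Proof.
move=> cc e0 hpos hneg.
have ex : exists k, (n <= k)%N || (0 <= slope c k) by exists n; rewrite leqnn.
case: (ex_minnP ex) => m Pm mmin.
have mn : (m <= n)%N by apply: mmin; rewrite leqnn.
rewrite (@big_cat_nat _ _ _ m 0 n _ _ (leq0n m) mn) /=.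
have -> : \sum_(0 <= k < m) `|slope e k| = \sum_(0 <= k < m) - (e k.+1 - e k).
  apply: eq_big_nat => k /andP[_ km].
  have kn : (k < n)%N := leq_trans km mn.
  have : ~~ ((n <= k)%N || (0 <= slope c k)).
    by apply/negP => /mmin; rewrite leqNgt km.
  rewrite negb_or -ltNge => /andP[_ h]; rewrite ler0_norm //.
  by apply: hneg => //; apply: ltW.
have -> : \sum_(m <= k < n) `|slope e k| = \sum_(m <= k < n) (e k.+1 - e k).
  apply: eq_big_nat => k /andP[mk kn].
  have hm : 0 <= slope c m.
    case/orP: Pm => // nm; by have := leq_ltn_trans (leq_trans nm mk) kn; rewrite ltnn.
  have mlt : (m < n)%N by apply: leq_ltn_trans mk kn.
  rewrite ger0_norm //; apply: hpos => //.
  exact: le_trans hm (cvx_mono cc mk kn).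
rewrite sumrN !telescope_sumr //.
have := e0 m mn; lra.
Qed.

Definition cutp (d : nat -> R) v x :=
  (forall k, (k < x)%N -> d k <= v) /\ (forall k, (x <= k)%N -> (k < n)%N -> v <= d k).

Lemma argmin_cut W rho x : cvx W -> (x <= n)%N ->
  (forall j, (j <= n)%N -> W x + rho * x%:R <= W j + rho * j%:R) ->
  cutp (slope W) (- rho) x.
Proof.
move=> cw xn hmin; split.
- move=> k kx; destruct x as [|x]; first by [].
  have := hmin x (ltnW xn); have := cvx_mono cw (kx : (k <= x)%N) xn.
  rewrite /slope -natr1 mulrDr mulr1; lra.
- move=> k xk kn.
  have xn' : (x < n)%N by apply: leq_ltn_trans xk kn.
  have := hmin x.+1 xn'; have := cvx_mono cw xk kn.
  rewrite /slope -natr1 mulrDr mulr1; lra.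
Qed.

Definition btw (d d' : nat -> R) v k : R :=
  ((Num.min (d k) (d' k) <= v) && (v <= Num.max (d k) (d' k)))%:R.

Lemma btw_ge0 d d' v k : 0 <= btw d d' v k.
Proof. exact: ler0n. Qed.

Lemma move_bd0 d d' v x x' : (x <= x')%N -> (x' <= n)%N ->
  cutp d v x -> cutp d' v x' -> x'%:R - x%:R <= \sum_(0 <= k < n) btw d d' v k.
Proof.
move=> xx' x'n [_ c2] [c3 _].
rewrite (@big_cat_nat _ _ _ x 0 n _ _ (leq0n x) (leq_trans xx' x'n)) /=.
rewrite (@big_cat_nat _ _ _ x' x n _ _ xx' x'n) /=.
have -> : \sum_(x <= k < x') btw d d' v k = \sum_(x <= k < x') 1.
  apply: eq_big_nat => k /andP[xk kx'].
  have kn : (k < n)%N by apply: leq_trans kx' x'n.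
  have h1 := c2 k xk kn; have h2 := c3 k kx'.
  rewrite /btw (_ : (_ && _) = true) //; apply/andP; split.
    by rewrite ge_min h2 orbT.
  by rewrite le_max h1.
rewrite sumr_const_nat -natrB //.
have := @sumr_ge0 R _ (index_iota 0 x) xpredT (btw d d' v) (fun k _ => btw_ge0 d d' v k).
have := @sumr_ge0 R _ (index_iota x' n) xpredT (btw d d' v) (fun k _ => btw_ge0 d d' v k).
lra.
Qed.

Lemma btwC d d' v k : btw d d' v k = btw d' d v k.
Proof. by rewrite /btw minC maxC. Qed.

Lemma move_bd d d' v x x' : (x <= n)%N -> (x' <= n)%N ->
  cutp d v x -> cutp d' v x' -> dist x x' <= \sum_(0 <= k < n) btw d d' v k.
Proof.
move=> xn x'n cx cx'; case: (leqP x x') => h.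
  by rewrite dist_ge //; exact: move_bd0.
rewrite dist_le ?(ltnW h) //.
under eq_bigr do rewrite btwC.
exact: move_bd0 (ltnW h) xn cx' cx.
Qed.

Lemma cvx_add f g : cvx f -> cvx g -> cvx (fun j => f j + g j).
Proof. move=> cf cg k kn; have := cf k kn; have := cg k kn; rewrite /slope; lra. Qed.

End Disc.

Section Conc.
Variables (R : realType) (nrm : R -> R) (theta delta : R) (n : nat)
    (c : nat -> 'I_n.+1 -> R).
Hypotheses (Hnrm : is_norm nrm) (Htheta : 1 <= theta) (Hdelta : 0 < delta)
    (Hc_nonneg : forall t k, 0 <= c t k)
    (Hc_convex : forall t, exists g : R -> R,
        convex_fun g /\ forall k, c t k = g (state delta k)).

Definition a := nrm 1.
Definition b := theta * a * delta.

Lemma nrmE x : nrm x = a * `|x|.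
Proof. by case: Hnrm => _ h _; rewrite -[x]mulr1 h mulr1 mulrC. Qed.

Lemma a_gt0 : 0 < a.
Proof.
case: Hnrm => h0 h1 h2.
have n0 : nrm 0 = 0 by have := h1 0 0; rewrite mul0r normr0 mul0r.
have n1 : nrm (-1) = a by have := h1 (-1) 1; rewrite mulr1 normrN normr1 mul1r.
have a0 : 0 <= a.
  have := h2 1 (-1); rewrite subrr n0 n1 -/a; lra.
rewrite lt_neqAle a0 andbT; apply/eqP => e.
by have := h0 1 (esym e); apply/eqP; rewrite oner_eq0.
Qed.

Lemma b_gt0 : 0 < b.
Proof. have := a_gt0; rewrite /b. have : 0 < theta by have := Htheta; lra. by move=> *; rewrite !mulr_gt0. Qed.

Definition W s (k : nat) : R := work nrm theta delta c s (inord k).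
Definition cc s (k : nat) : R := c s (inord k).

Lemma nstate (i j : 'I_n.+1) :
  theta * nrm (state delta i - state delta j) = b * dist R i j.
Proof.
rewrite nrmE /state -mulrBl normrM (gtr0_norm Hdelta) /dist /b; lra.
Qed.

Lemma W0 k : (k <= n)%N -> W 0 k = b * k%:R.
Proof.
move=> kn; rewrite /W /= nrmE /state inordK // normrM (gtr0_norm Hdelta).
by rewrite normr_nat /b; lra.
Qed.

Lemma minI_le m (F : 'I_m.+1 -> R) j : minI F <= F j.
Proof. by rewrite /minI (bigD1 j) //= ge_min lexx. Qed.

Lemma minI_ex m (F : 'I_m.+1 -> R) : exists j, minI F = F j.
Proof.
rewrite /minI; apply: (big_ind (fun y => exists j, y = F j)).
- by exists ord0.
- move=> x y [i ->] [j ->]; case: (leP (F i) (F j)) => h.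
    by exists i.
  by exists j.
- by move=> i _; exists i.
Qed.

Lemma Wspec s : infspec n b (fun j => W s j + cc s.+1 j) (W s.+1).
Proof.
split.
- move=> i j ilt jlt; rewrite /W /cc /=.
  have /= := minI_le (fun y => work nrm theta delta c s y + c s.+1 y +
     theta * nrm (state delta (@inord n i) - state delta y)) (@inord n j).
  by rewrite nstate !inordK.
- move=> i ilt; rewrite /W /cc /=.
  case: (minI_ex (fun y => work nrm theta delta c s y + c s.+1 y +
     theta * nrm (state delta (@inord n i) - state delta y))) => j ->.
  exists (val j); first by rewrite -ltnS; exact: ltn_ord.
  by rewrite nstate inordK // inord_val.
Qed.

Lemma cvx_cc s : cvx n (cc s).
Proof.
move=> k kn; case: (Hc_convex s) => g [cg hg].
have h2 : (k.+2 < n.+1)%N by exact: kn.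
have h1 : (k.+1 < n.+1)%N := ltnW h2.
have h0 : (k < n.+1)%N := ltnW h1.
rewrite /slope /cc !hg /state !inordK //.
have := cg (k%:R * delta) (k.+2%:R * delta) (2^-1) (ltac:(apply/andP; split; lra)).
have -> : 2^-1 * (k%:R * delta) + (1 - 2^-1) * (k.+2%:R * delta) = k.+1%:R * delta.
  by rewrite -!natr1; field.
have -> : 1 - 2^-1 = 2^-1 :> R by field.
lra.
Qed.

Lemma nstate0 (i : 'I_n.+1) : theta * nrm (state delta i) = b * (val i)%:R.
Proof.
rewrite nrmE /state normrM (gtr0_norm Hdelta) normr_nat /b; lra.
Qed.

Lemma Winv s : cvx n (W s) /\ (forall i j, (i <= n)%N -> (j <= n)%N -> W s i <= W s j + b * dist R i j).
Proof.
elim: s => [|s [IH1 IH2]].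
  split.
    move=> k kn; have h1 : (k.+1 <= n)%N := ltnW kn.
    have h0 : (k <= n)%N := ltnW h1.
    rewrite /slope !W0 //.
    by rewrite -!natr1; lra.
  move=> i j ilt jlt; rewrite !W0 //.
  have := ler_wpM2l (ltW b_gt0) (ler_norm (i%:R - j%:R : R)).
  rewrite /dist; lra.
have ch := cvx_add IH1 (cvx_cc s.+1).
split. have := infspec_cvx b_gt0 ch (Wspec s). done.
move=> i j ilt jlt; exact: (infspec_lip b_gt0 (Wspec s) ilt jlt).
Qed.

Lemma Wmono s i : (i <= n)%N -> W s i <= W s.+1 i.
Proof.
move=> ilt; apply: (infspec_mono (Winv s).2 _ (Wspec s)) => // j _.
exact: Hc_nonneg.
Qed.

Lemma slope_bd s k : (k < n)%N -> -b <= slope (W s) k <= b.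
Proof.
move=> kn; have l1 := (Winv s).2 k k.+1 (ltnW kn) kn.
have l2 := (Winv s).2 k.+1 k kn (ltnW kn).
rewrite (dist_ge R (leqnSn k)) in l1; rewrite (dist_le R (leqnSn k)) in l2.
rewrite /slope -natr1 in l1 l2 *; apply/andP; split; lra.
Qed.

Lemma sum_slope s :
  \sum_(0 <= k < n) `|slope (W s.+1) k - slope (W s) k| <=
  (W s.+1 0%N + W s.+1 n) - (W s 0%N + W s n).
Proof.
have ch := cvx_add (Winv s).1 (cvx_cc s.+1).
have e : forall k, slope (W s.+1) k - slope (W s) k = slope (fun j => W s.+1 j - W s j) k.
  by move=> k; rewrite /slope; lra.
under eq_bigr do rewrite e.
have -> : W s.+1 0%N + W s.+1 n - (W s 0%N + W s n) =
  (W s.+1 0%N - W s 0%N) + (W s.+1 n - W s n) by lra.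
apply: (valley (cvx_cc s.+1)).
- by move=> i ilt; have := Wmono s ilt; lra.
- move=> k kn hc; rewrite -e.
  have [h _] := sign_slope ch (Wspec s) kn (slope_bd s kn).
  by have := h hc; lra.
- move=> k kn hc; rewrite -e.
  have [_ h] := sign_slope ch (Wspec s) kn (slope_bd s kn).
  by have := h hc; lra.
Qed.

Lemma drbg_cut r s :
  cutp n (slope (W s)) (- (r * b)) (val (drbg nrm theta delta c r s.+1)).
Proof.
rewrite /drbg; case: arg_minP => // x _ hx.
apply: argmin_cut; first exact: (Winv s).1.
  by rewrite -ltnS; exact: ltn_ord.
move=> j jn; have := hx (inord j) isT.
have e : val (@inord n j) = j := inordK (jn : (j < n.+1)%N).
rewrite !nstate0 /W inord_val e !mulrA. done.
Qed.

Lemma drbg1 r : -1 < r -> drbg nrm theta delta c r 1 = ord0.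
Proof.
move=> r1; have [c1 _] := drbg_cut r 0.
apply: val_inj; rewrite [val ord0]/=.
have xn : (val (drbg nrm theta delta c r 1) <= n)%N.
  by rewrite -ltnS; exact: ltn_ord.
move: c1 xn; case: (val (drbg nrm theta delta c r 1)) => [_ _ //|x /(_ 0%N isT) h xn].
have n1 : (1 <= n)%N by apply: leq_trans xn.
move: h; rewrite /slope !W0 //.
have := b_gt0; move=> hb h; exfalso.
have : 0 < b * (1 + r) by apply: mulr_gt0 => //; lra.
move: h; rewrite mulr0 mulr1; lra.
Qed.

Definition dS s k := slope (W s.+1) k.
Definition dS' s k := slope (W s) k.
Definition lo s k := - Num.max (dS s k) (dS' s k) / b.
Definition hi s k := - Num.min (dS s k) (dS' s k) / b.
Definition II s k : set R := [set` `[lo s k, hi s k]].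

Lemma btw_ind s k r : btw (slope (W s.+1)) (slope (W s)) (- (r * b)) k <= \1_(II s k) r.
Proof.
rewrite /btw /indic; case: andP => [[h1 h2]|_]; last by rewrite ler0n.
suff -> : r \in II s k by [].
rewrite /II mem_set //= in_itv /=.
have hb := b_gt0.
rewrite /lo /hi ler_pdivrMr // ler_pdivlMr //.
apply/andP; split; rewrite /dS /dS'; lra.
Qed.

Lemma nrm_state (i j : 'I_n.+1) :
  nrm (state delta i - state delta j) = a * delta * dist R i j.
Proof.
rewrite nrmE /state -mulrBl normrM (gtr0_norm Hdelta) /dist; lra.
Qed.

Lemma ad_ge0 : 0 <= a * delta.
Proof. by apply: mulr_ge0; [exact: ltW a_gt0| exact: ltW Hdelta]. Qed.

Lemma drbg_le r i : (val (drbg nrm theta delta c r i) <= n)%N.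
Proof. by rewrite -ltnS; exact: ltn_ord. Qed.

Lemma SC_bd r t : -1 < r ->
  SC nrm theta delta c r t <=
  \sum_(0 <= s < t.-1) \sum_(0 <= k < n) a * delta * \1_(II s k) r.
Proof.
move=> r1; rewrite /SC; case: t => [|t].
  by rewrite big_geq // big_geq.
rewrite big_ltn // drbg1 //= subrr.
have -> : nrm 0 = 0.
  by rewrite nrmE normr0 mulr0.
rewrite add0r (big_addn 0 t.+2 2).
have -> : (t.+2 - 2 = t)%N by rewrite subSS subSS subn0.
apply: ler_sum => s _.
rewrite addn2 /= nrm_state.
have h2 := move_bd (drbg_le r s.+2) (drbg_le r s.+1) (drbg_cut r s.+1) (drbg_cut r s).
apply: (le_trans (ler_wpM2l ad_ge0 h2)).
rewrite mulr_sumr; apply: ler_sum => k _.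
have := btw_ind s k r. move=> hh. apply: ler_wpM2l; first exact: ad_ge0. exact: hh.
Qed.

Lemma maxmin (x y : R) : Num.max x y - Num.min x y = `|x - y|.
Proof.
case: (leP x y) => h.
  by rewrite ler0_norm ?subr_le0 // opprB.
by rewrite gtr0_norm ?subr_gt0.
Qed.

Lemma lohi s k : lo s k <= hi s k.
Proof.
have hb := b_gt0.
rewrite /lo /hi !mulNr lerN2 ler_pM2r ?invr_gt0 //.
case: (leP (dS s k) (dS' s k)) => h; lra.
Qed.

Definition EE s := W s 0%N + W s n.

Lemma phiE t : phi nrm theta delta c t = EE t / (2 * theta) - a * delta * n%:R / 2.
Proof.
rewrite /phi /EE nrm_state /dist /W.
have -> : (inord 0 : 'I_n.+1) = ord0 by apply: val_inj; rewrite /= inordK.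
have -> : (inord n : 'I_n.+1) = ord_max by apply: val_inj; rewrite /= inordK.
by rewrite /= subr0 normr_nat.
Qed.

Lemma EE0 : EE 0 = theta * (a * delta * n%:R).
Proof. by rewrite /EE !W0 // mulr0 add0r /b !mulrA. Qed.

Lemma real_bd t :
  2^-1 * (\sum_(0 <= s < t.-1) \sum_(0 <= k < n) a * delta * (hi s k - lo s k))
  <= phi nrm theta delta c t.
Proof.
have hb := b_gt0; have ha := a_gt0; have ht : 0 < theta by have := Htheta; lra.
set q := theta^-1.
have q0 : 0 < q by rewrite invr_gt0.
have qt : q * theta = 1 by rewrite mulVf // gt_eqF.
have e1 : forall s k, a * delta * (hi s k - lo s k) = q * `|dS s k - dS' s k|.
  move=> s k; rewrite /hi /lo -maxmin /b /q; field.
  by rewrite !gt_eqF //; apply: mulr_gt0 => //.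
have S1 : \sum_(0 <= s < t.-1) \sum_(0 <= k < n) a * delta * (hi s k - lo s k)
   <= q * (EE t.-1 - EE 0).
  rewrite -telescope_sumr // mulr_sumr; apply: ler_sum => s _.
  under eq_bigr do rewrite e1.
  rewrite -mulr_sumr; apply: ler_wpM2l; first exact: ltW.
  exact: sum_slope.
have S2 : q * EE t.-1 <= q * EE t.
  apply: ler_wpM2l; first exact: ltW.
  case: t {S1} => [//|t] /=.
  by rewrite /EE; have := Wmono t (leq0n n); have := Wmono t (leqnn n); lra.
have S3 : q * EE 0 = a * delta * n%:R by rewrite EE0 /q mulKf // gt_eqF.
rewrite phiE invfM -/q.
have -> : EE t * (2^-1 * q) = 2^-1 * (q * EE t) by ring.
move: S1; rewrite mulrBr; lra.
Qed.

Local Open Scope ereal_scope.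

Lemma main t : expected_SC nrm theta delta c t <= (phi nrm theta delta c t)%:E.
Proof.
rewrite /expected_SC.
set D := @unif_dom R.
have mD : measurable D by exact: measurable_itv.
have Dr : forall r, D r -> (-1 < r)%R.
  by move=> r; rewrite /D /unif_dom /= in_itv /= => /andP[].
have had := ad_ge0.
pose F s k r := ((a * delta) * \1_(II s k) r)%:E.
have F0 : forall s k r, 0 <= F s k r.
  by move=> s k r; rewrite /F lee_fin mulr_ge0 // indic_ge0.
have mF : forall s k, measurable_fun D (F s k).
  move=> s k; rewrite /F; apply/measurable_EFinP.
  apply: measurable_realfun.measurable_funM.
    exact: measurable_cst.
  apply: measurable_indic; exact: measurable_itv.
have step1 : \int[lebesgue_measure]_(r in D) (SC nrm theta delta c r t)%:E <=
   \int[lebesgue_measure]_(r in D) (\sum_(0 <= s < t.-1) \sum_(0 <= k < n) F s k r).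
  rewrite ge0_integralE; last first.
    move=> r Dr'; rewrite lee_fin /SC; apply: sumr_ge0 => i _.
    by rewrite nrm_state; apply: mulr_ge0 => //; exact: dist_ge0.
  rewrite ge0_integralE; last first.
    by move=> r _; apply: sume_ge0 => s _; apply: sume_ge0 => k _.
  apply: le_ereal_sup => _ [h hh <-]; exists h => //= x.
  apply: le_trans (hh x) _; apply: lee_restrict => r Dr'.
  rewrite /F; under eq_bigr do rewrite sumEFin.
  rewrite sumEFin lee_fin.
  exact: SC_bd (Dr r Dr').
have step2 : \int[lebesgue_measure]_(r in D) (\sum_(0 <= s < t.-1) \sum_(0 <= k < n) F s k r)
   = \sum_(0 <= s < t.-1) \sum_(0 <= k < n) \int[lebesgue_measure]_(r in D) F s k r.
  rewrite ge0_integral_sum //; last 2 first.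
  - by move=> s; apply: emeasurable_sum => k; exact: mF.
  - by move=> s r _; apply: sume_ge0 => k _.
  apply: eq_bigr => s _; rewrite ge0_integral_sum //.
  + by move=> k; exact: mF.
have step3 : forall s k, \int[lebesgue_measure]_(r in D) F s k r <=
    ((a * delta) * (hi s k - lo s k))%:E.
  move=> s k; rewrite /F.
  have mI : measurable (II s k) by exact: measurable_itv.
  have e1 : \int[lebesgue_measure]_(r in D) ((a * delta) * \1_(II s k) r)%:E =
      (a * delta)%:E * lebesgue_measure (II s k `&` D).
    under eq_integral do rewrite EFinM.
    rewrite ge0_integralZl_EFin //.
    - by rewrite integral_indic //; exact: measurable_itv.
    - by apply/measurable_EFinP; apply: measurable_indic; exact: measurable_itv.
  rewrite e1.
  rewrite (EFinM (a * delta)); apply: lee_wpmul2l; first by rewrite lee_fin.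
  apply: le_trans (measureIl _ _ _) _; [exact: measurable_itv|exact: mD|].
  have e2 := lebesgue_measure_itv `[lo s k, hi s k].
  move/eqP: e2; rewrite eq_le => /andP[e3 _].
  apply: le_trans e3 _ => /=.
  case: ifP => _; first by rewrite lee_fin.
  by rewrite lee_fin subr_ge0 lohi.
rewrite step2 in step1.
have h2 : ((0:R)%:E <= (2^-1)%:E) by rewrite lee_fin invr_ge0.
apply: le_trans (lee_wpmul2l h2 step1) _.
have step4 : \sum_(0 <= s < t.-1) \sum_(0 <= k < n)
    \int[lebesgue_measure]_(r in D) F s k r <=
   \sum_(0 <= s < t.-1) \sum_(0 <= k < n) ((a * delta) * (hi s k - lo s k))%:E.
  by apply: lee_sum => s _; apply: lee_sum => k _; exact: step3.
apply: le_trans (lee_wpmul2l h2 step4) _.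
under eq_bigr do rewrite sumEFin.
rewrite sumEFin -EFinM lee_fin.
exact: real_bd.
Qed.

End Conc.


Theorem lemma10 (R : realType) (nrm : R -> R) (theta delta : R) (n : nat)
    (c : nat -> 'I_n.+1 -> R)
    (Hnrm : is_norm nrm) (Htheta : 1 <= theta) (Hdelta : 0 < delta)
    (Hc_nonneg : forall t k, 0 <= c t k)
    (Hc_convex : forall t, exists g : R -> R,
        convex_fun g /\ forall k, c t k = g (state delta k))
    (t : nat) :
  (expected_SC nrm theta delta c t <= (phi nrm theta delta c t)%:E)%E.
Proof. exact: main. Qed.
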